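(* Let $n\ge1$ and $A=(A_1,\dots,A_n)\in V_n$. The following are equivalent: (i) $A$ is stable; (ii) there exist $1\le j,k,l\le n$ such that $(A_j,A_k,A_l)\in V_3$ is stable; (iii) there exist $1\le j,k,l\le n$ such that $\sigma_{jk}(A)\neq0$ or $\Delta_{jkl}(A)\neq0$; (iv) $A$ is not similar to an upper triangular $n$-matrix; (v) there is no proper nonzero subspace of $\mathbb{C}^2$ preserved by all of $A_1,\dots,A_n$.
   Context: $V_n=(M_{2\times2}(\mathbb{C}))^{\times n}$ with $SL(2,\mathbb{C})$ acting by simultaneous conjugation; a point is stable if its orbit map $g\mapsto g\cdot x$ from $SL(2,\mathbb{C})$ is proper. Similar means in the same $GL(2,\mathbb{C})$-orbit under simultaneous conjugation; an upper triangular $n$-matrix has all components upper triangular. With $t_j=\mathsf{tr}(A_j)$, $t_{jk}=\mathsf{tr}(A_jA_k)$, $t_{jkl}=\mathsf{tr}(A_jA_kA_l)$, define $\tau_{jk}=t_{jk}-\tfrac12t_jt_k$, $\sigma_{jk}=\tau_{jk}^2-\tau_{jj}\tau_{kk}$ and $\Delta_{jkl}=(t_{jkl}-t_{lkj})^2$. *)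

(* Defs.v *)
From HB Require Import structures.
From mathcomp Require Import all_boot all_order all_algebra.
From mathcomp Require Import all_classical all_reals.
From mathcomp Require Import topology normedtype.
From mathcomp Require Import complex.
Set Implicit Arguments. Unset Strict Implicit. Unset Printing Implicit Defensive.
Import Order.TTheory GRing.Theory Num.Theory.
Local Open Scope ring_scope.
Local Open Scope classical_set_scope.

(* The complex numbers: C = R[i] for R : realType (R is a model of the reals),
   with its usual metric topology (from the norm |z|), declared exactly as
   MathComp-Analysis does for realType / rcfType (num_topology.v). *)
HB.instance Definition _ (R : realType) := PseudoPointedMetric.copy R[i] R[i]^o.

(* V_n = (M_2(C))^n, as functions 'I_n -> 'M_2, with the product topology
   (M_2(C) carries the entrywise = norm topology). *)
Notation Vn R n := {ptws 'I_n -> 'M[R[i]]_2} (only parsing).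

Definition SL2 (R : realType) : set 'M[R[i]]_2 := [set g | \det g = 1].
Arguments SL2 R : clear implicits.

Definition conj_actV (R : realType) (n : nat) (g : 'M[R[i]]_2) (A : Vn R n)
  : Vn R n := fun i => g *m A i *m invmx g.

(* x is stableV iff the orbit map SL(2,C) -> V_n, g |-> g.x, is proper:
   preimages of compact sets are compact (SL(2,C) is closed in M_2(C), so
   compactness in SL(2,C) is compactness in M_2(C) of a subset of SL2). *)
Definition stableV (R : realType) (n : nat) (A : Vn R n) : Prop :=
  forall K : set (Vn R n), compact K ->
    compact (SL2 R `&` (fun g => conj_actV g A) @^-1` K).

Definition similarV (R : realType) (n : nat) (A B : Vn R n) : Prop :=
  exists2 P : 'M[R[i]]_2, P \in unitmx & conj_actV P A = B.

(* upper triangular 2x2 matrix: the (2,1) entry vanishes *)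
Definition upper_tri2V (R : realType) (M : 'M[R[i]]_2) : Prop :=
  M (lift ord0 ord0) ord0 = 0.

Definition upper_tri_tupleV (R : realType) (n : nat) (B : Vn R n) : Prop :=
  forall i, upper_tri2V (B i).

Definition tripleV (R : realType) (a b c : 'M[R[i]]_2) : Vn R 3 :=
  fun i => tnth [tuple a; b; c] i.

Section Traces.
Variables (R : realType) (n : nat) (A : Vn R n).
Definition t1V (j : 'I_n) : R[i] := \tr (A j).
Definition t2V (j k : 'I_n) : R[i] := \tr (A j *m A k).
Definition t3V (j k l : 'I_n) : R[i] := \tr (A j *m A k *m A l).
Definition tauV (j k : 'I_n) : R[i] := t2V j k - 2^-1 * t1V j * t1V k.
Definition sigmaV (j k : 'I_n) : R[i] := tauV j k ^+ 2 - tauV j j * tauV k k.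
Definition DeltaV (j k l : 'I_n) : R[i] := (t3V j k l - t3V l k j) ^+ 2.
End Traces.

(* W (a 2x2 matrix whose rows span a subspace of C^2, vectors viewed as
   columns) is preserved by M : M w in span W for w in span W, i.e. the row
   space of W is stableV under right multiplication by M^T. *)
Definition preservesV (R : realType) (M W : 'M[R[i]]_2) : Prop :=
  (W *m M^T <= W)%MS.

(* Main.v *)
Require Import Defs.
From HB Require Import structures.
From mathcomp Require Import all_boot all_order all_algebra.
From mathcomp Require Import all_classical all_reals.
From mathcomp Require Import topology normedtype.
From mathcomp Require Import complex.
From mathcomp Require Import ring.
Import Order.TTheory GRing.Theory Num.Theory.
Import numFieldTopology.Exports.
Local Open Scope ring_scope.
Local Open Scope classical_set_scope.
Set Implicit Arguments. Unset Strict Implicit. Unset Printing Implicit Defensive.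
Section Alg.
Variable F : comNzRingType.

Lemma ord2P (i : 'I_2) : i = 0 \/ i = 1.
Proof. by case: i => [[|[|//]]] Hi; [left|right]; apply/val_inj. Qed.

Lemma lift00 : lift ord0 ord0 = 1 :> 'I_2.
Proof. exact/val_inj. Qed.
Lemma ord0E : ord0 = 0 :> 'I_2.
Proof. exact/val_inj. Qed.

Lemma sum2 (f : 'I_2 -> F) : \sum_(i < 2) f i = f 0 + f 1.
Proof. by rewrite big_ord_recr big_ord1 /=; congr (f _ + f _); apply/val_inj. Qed.

Lemma mul2E m n (M : 'M[F]_(m, 2)) (N : 'M[F]_(2, n)) i j : (M *m N) i j = M i 0 * N 0 j + M i 1 * N 1 j.
Proof. by rewrite mxE sum2. Qed.

Lemma tr2 (M : 'M[F]_2) : \tr M = M 0 0 + M 1 1.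
Proof. by rewrite /mxtrace sum2. Qed.

Lemma liftI2 (i : 'I_2) (j : 'I_1) : lift i j = if i == 0 then 1 else 0.
Proof. by case: (ord2P i) => ->; apply/val_inj; rewrite /= ?ord1. Qed.

Lemma det2 (M : 'M[F]_2) : \det M = M 0 0 * M 1 1 - M 0 1 * M 1 0.
Proof.
rewrite (expand_det_row _ 0) sum2 /cofactor !det_mx11 !mxE !liftI2 /=.
change (0 + 1 %% 2)%N with 1%N; rewrite expr0 expr1; ring.
Qed.

Lemma adj2 (M : 'M[F]_2) i j : \adj M i j =
  if i == 0 then (if j == 0 then M 1 1 else - M 0 1)
  else (if j == 0 then - M 1 0 else M 0 0).
Proof.
rewrite mxE /cofactor det_mx11 !mxE !liftI2.
case: (ord2P i) => ->; case: (ord2P j) => -> /=.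
- by rewrite expr0 mul1r.
- by change (1 %% 2 + 0)%N with 1%N; rewrite expr1 mulN1r.
- by change (0 + 1 %% 2)%N with 1%N; rewrite expr1 mulN1r.
- by change (1 %% 2 + 1 %% 2)%N with 2%N; rewrite sqrrN expr1n mul1r.
Qed.

End Alg.
Section Alg2.
Variable R : realType.
Local Notation C := R[i].

Definition CE {n} (A : 'I_n -> 'M[C]_2) :=
  exists u : 'cV[C]_2, u != 0 /\ forall i, exists l, A i *m u = l *: u.

Definition vec2 (x y : C) : 'cV[C]_2 := \matrix_(i, j) if i == 0 then x else y.

Lemma vec2E0 x y : vec2 x y 0 0 = x. Proof. by rewrite mxE. Qed.
Lemma vec2E1 x y : vec2 x y 1 0 = y. Proof. by rewrite mxE. Qed.

Lemma cV2_eq (u v : 'cV[C]_2) : u 0 0 = v 0 0 -> u 1 0 = v 1 0 -> u = v.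
Proof.
move=> h0 h1; apply/matrixP => i j; rewrite (ord1 j).
by case: (ord2P i) => ->.
Qed.

Lemma cV2_neq0 {u : 'cV[C]_2} : u != 0 -> u 0 0 != 0 \/ u 1 0 != 0.
Proof.
move=> un; case: (eqVneq (u 0 0) 0) => h0; last by left.
case: (eqVneq (u 1 0) 0) => h1; last by right.
have hu : u = 0 by apply: cV2_eq; rewrite mxE.
by rewrite hu eqxx in un.
Qed.

Lemma vec2_neq0 x y : y != 0 -> vec2 x y != 0.
Proof. by move=> hy; apply/eqP => /matrixP /(_ 1 0); rewrite !mxE /=; apply/eqP. Qed.

Lemma vec2_neq0' x y : x != 0 -> vec2 x y != 0.
Proof. by move=> hy; apply/eqP => /matrixP /(_ 0 0); rewrite !mxE /=; apply/eqP. Qed.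

Lemma eig_cross (M : 'M[C]_2) (u : 'cV[C]_2) : u != 0 ->
  (M *m u) 0 0 * u 1 0 = (M *m u) 1 0 * u 0 0 -> exists l, M *m u = l *: u.
Proof.
move=> /cV2_neq0 [h0|h1] hc.
- exists ((M *m u) 0 0 / u 0 0); apply: cV2_eq; rewrite [RHS]mxE.
    by field.
  by rewrite mulrAC hc; field.
- exists ((M *m u) 1 0 / u 1 0); apply: cV2_eq; rewrite [RHS]mxE; last by field.
  by rewrite mulrAC -hc; field.
Qed.

Definition e0 : 'cV[C]_2 := vec2 1 0.

Lemma e0_neq0 : e0 != 0. Proof. by apply: vec2_neq0'; rewrite oner_eq0. Qed.

Lemma e0_eig (M : 'M[C]_2) : M 1 0 = 0 -> exists l, M *m e0 = l *: e0.
Proof.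
move=> h; apply: eig_cross; first exact: e0_neq0.
by rewrite !mul2E !mxE /= h; ring.
Qed.

Lemma mul_e0 (M : 'M[C]_2) i : (M *m e0) i 0 = M i 0.
Proof. by rewrite mul2E !mxE /=; ring. Qed.

Definition Qof (u : 'cV[C]_2) : 'M[C]_2 := \matrix_(i, j)
  if j == 0 then u i 0 else
  if u 0 0 == 0 then (if i == 0 then 1 else 0) else (if i == 0 then 0 else 1).

Lemma Qof_unit u : u != 0 -> Qof u \in unitmx.
Proof.
move=> un; rewrite unitmxE unitfE det2 !mxE /=.
case: (eqVneq (u 0 0) 0) => h0 /=.
  have [h|h1] := cV2_neq0 un; first by rewrite h0 eqxx in h.
  by rewrite h0 mul0r sub0r mul1r oppr_eq0.
by rewrite mulr1 mul0r subr0.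
Qed.

Lemma Qof_e0 u : Qof u *m e0 = u.
Proof. by apply: cV2_eq; rewrite mul_e0 mxE. Qed.

Lemma conj_up (M : 'M[C]_2) u l : u != 0 -> M *m u = l *: u ->
  (invmx (Qof u) *m M *m Qof u) 1 0 = 0.
Proof.
move=> un hM; have hQ := Qof_unit un.
have : invmx (Qof u) *m M *m Qof u *m e0 = l *: e0.
  rewrite -!mulmxA Qof_e0 hM -scalemxAr -{2}(Qof_e0 u) mulmxA mulVmx //.
  by rewrite mul1mx.
move/matrixP/(_ (1 : 'I_2) (0 : 'I_1)); rewrite mul_e0 => ->.
by rewrite mxE vec2E1 mulr0.
Qed.

Lemma CE_conj n (A : 'I_n -> 'M[C]_2) (P : 'M[C]_2) : P \in unitmx ->
  CE (fun i => P *m A i *m invmx P) -> CE A.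
Proof.
move=> hP [u [un hu]]; exists (invmx P *m u); split.
  apply: contra un => /eqP h; apply/eqP.
  by rewrite -(mulKVmx hP u) h mulmx0.
move=> i; have [l hl] := hu i; exists l.
have := congr1 (mulmx (invmx P)) hl.
by rewrite -!mulmxA mulKmx // -scalemxAr.
Qed.

End Alg2.
Arguments e0 {R}.
Section Alg3.
Variable R : realType.
Local Notation C := R[i].

Lemma UT_CE n (A : Vn R n) :
  (exists B : {ptws 'I_n -> 'M[R[i]]_2}, similarV A B /\ upper_tri_tupleV B)
  <-> CE A.
Proof.
split.
  move=> [B [[P hP hB] hU]]; apply: (CE_conj hP).
  have -> : (fun i => P *m A i *m invmx P) = B by rewrite -hB.
  exists e0; split; first exact: e0_neq0.
  by move=> i; apply: e0_eig; have := hU i; rewrite /upper_tri2V lift00 ord0E.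
move=> [u [un hu]]; exists (conj_actV (invmx (Qof u)) A); split.
  by exists (invmx (Qof u)) => //; rewrite unitmx_inv Qof_unit.
move=> i; have [l hl] := hu i.
by rewrite /upper_tri2V /conj_actV invmxK lift00 ord0E (conj_up un hl).
Qed.

Lemma W_CE n (A : Vn R n) :
  (exists W : 'M[R[i]]_2,
     [/\ (0 < \rank W)%N, (\rank W < 2)%N & forall i, preservesV (A i) W])
  <-> CE A.
Proof.
split.
  move=> [W [h0 h1 hW]].
  have Wn0 : W != 0 by rewrite -mxrank_eq0 -lt0n.
  set w := nz_row W.
  have wn0 : w != 0 by rewrite nz_row_eq0.
  have hwW : (w <= W)%MS := nz_row_sub W.
  have rw : \rank w = 1%N.
    apply/eqP; rewrite eqn_leq rank_leq_row lt0n mxrank_eq0 wn0 //.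
  have rW : \rank W = 1%N by apply/eqP; rewrite eqn_leq -ltnS h1 h0.
  have hWw : (W <= w)%MS by rewrite -(mxrank_leqif_sup hwW).2 rw rW.
  exists w^T; split; first by apply: contra wn0 => /eqP h; rewrite -trmx0 in h; rewrite (trmx_inj h).
  move=> i.
  have : (w *m (A i)^T <= w)%MS.
    by apply: submx_trans (submxMr _ hwW) _; apply: submx_trans (hW i) hWw.
  move/sub_rVP => [a ha]; exists a.
  by rewrite -[A i]trmxK -trmx_mul ha linearZ.
move=> [u [un hu]].
pose W : 'M[C]_2 := (const_mx 1 : 'M[C]_(2, 1)) *m u^T.
have Wn0 : W != 0.
  apply: contra un => /eqP hW; apply/eqP; apply: cV2_eq.
    by have := congr1 (fun M : 'M[C]_2 => M 0 0) hW; rewrite !mxE big_ord1 !mxE mul1r.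
  by have := congr1 (fun M : 'M[C]_2 => M 0 1) hW; rewrite !mxE big_ord1 !mxE mul1r.
exists W; split.
- by rewrite lt0n mxrank_eq0.
- by apply: leq_ltn_trans (mxrankM_maxl _ _) _; apply: leq_ltn_trans (rank_leq_col _) _.
- move=> i; have [l hl] := hu i.
  rewrite /preservesV /W -mulmxA -trmx_mul hl linearZ /= -scalemxAr.
  exact/scalemx_sub/submx_refl.
Qed.

End Alg3.
Section Alg4.
Variable R : realType.
Local Notation C := R[i].
Implicit Types X Y Z M : 'M[C]_2.

Definition sig X Y : C :=
  (\tr (X *m Y) - 2^-1 * \tr X * \tr Y) ^+ 2 -
  (\tr (X *m X) - 2^-1 * \tr X * \tr X) * (\tr (Y *m Y) - 2^-1 * \tr Y * \tr Y).
Definition del X Y Z : C := \tr (X *m Y *m Z) - \tr (Z *m Y *m X).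
Definition gfun X Y : C := (X 0 0 - X 1 1) * (Y 0 0 - Y 1 1) * X 0 1
  + X 0 1 ^+ 2 * Y 1 0 - (X 0 0 - X 1 1) ^+ 2 * Y 0 1.

Lemma sigmaE n (A : Vn R n) j k : sigmaV A j k = sig (A j) (A k).
Proof. by []. Qed.
Lemma DeltaE n (A : Vn R n) j k l : DeltaV A j k l = del (A j) (A k) (A l) ^+ 2.
Proof. by []. Qed.

Lemma two_neq0 : (2 : C) != 0.
Proof. by rewrite pnatr_eq0. Qed.

Lemma sig_up X Y : X 1 0 = 0 -> sig X Y = Y 1 0 * gfun X Y.
Proof.
move=> h; rewrite /sig /gfun !tr2 !mul2E h.
by field; rewrite ?pnatr_eq0.
Qed.

Lemma del_up X Y Z : X 1 0 = 0 -> Z 1 0 = 0 ->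
  (X 0 0 - X 1 1) * del X Y Z = Y 1 0 * gfun X Z.
Proof. move=> h1 h2; rewrite /del /gfun !tr2 !mul2E h1 h2; ring. Qed.

Lemma sig_ut X Y : X 1 0 = 0 -> Y 1 0 = 0 -> sig X Y = 0.
Proof. by move=> h1 h2; rewrite sig_up // h2 mul0r. Qed.

Lemma del_ut X Y Z : X 1 0 = 0 -> Y 1 0 = 0 -> Z 1 0 = 0 -> del X Y Z = 0.
Proof. move=> h1 h2 h3; rewrite /del !tr2 !mul2E h1 h2 h3; ring. Qed.

Lemma conj_mul (P X Y : 'M[C]_2) : P \in unitmx ->
  (P *m X *m invmx P) *m (P *m Y *m invmx P) = P *m (X *m Y) *m invmx P.
Proof.
move=> hP; rewrite -!mulmxA; congr (_ *m _).
by rewrite !mulmxA mulmxKV // mulmxA.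
Qed.

Lemma conj_tr (P X : 'M[C]_2) : P \in unitmx -> \tr (P *m X *m invmx P) = \tr X.
Proof. by move=> hP; rewrite mxtrace_mulC mulmxA mulVmx // mul1mx. Qed.

Lemma sig_conj (P X Y : 'M[C]_2) : P \in unitmx ->
  sig (P *m X *m invmx P) (P *m Y *m invmx P) = sig X Y.
Proof. by move=> hP; rewrite /sig !conj_mul // !conj_tr. Qed.

Lemma del_conj (P X Y Z : 'M[C]_2) : P \in unitmx ->
  del (P *m X *m invmx P) (P *m Y *m invmx P) (P *m Z *m invmx P) = del X Y Z.
Proof. by move=> hP; rewrite /del !conj_mul // !conj_tr. Qed.

Lemma cross_g X M : let u := vec2 (X 0 1) (- (X 0 0 - X 1 1)) in
  (M *m u) 0 0 * u 1 0 - (M *m u) 1 0 * u 0 0 = - gfun X M.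
Proof. by rewrite /= /gfun !mul2E !mxE /=; ring. Qed.

Lemma up_CE n (B : 'I_n -> 'M[C]_2) j0 : B j0 1 0 = 0 ->
  (B j0 0 1 != 0 \/ B j0 0 0 != B j0 1 1) ->
  (forall k, sig (B j0) (B k) = 0) ->
  (forall k l, del (B j0) (B k) (B l) = 0) -> CE B.
Proof.
move=> hX hns hs hd.
have hg k : B k 1 0 * gfun (B j0) (B k) = 0 by rewrite -sig_up.
have e0CE : (forall k, B k 1 0 = 0) -> CE B.
  by move=> h; exists e0; split; [exact: e0_neq0|move=> k; exact: e0_eig].
case: (eqVneq (B j0 0 0 - B j0 1 1) 0) => he.
  have hb : B j0 0 1 != 0.
    by case: hns => // hne; move: hne; rewrite -subr_eq0 he eqxx.
  apply: e0CE => k; have := hg k.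
  have -> : gfun (B j0) (B k) = B j0 0 1 ^+ 2 * B k 1 0.
    by rewrite /gfun he; ring.
  move/eqP; rewrite mulf_eq0 mulf_eq0 expf_eq0 (negbTE hb) andbF /= orbb.
  by move/eqP.
case: (pselect (exists k, B k 1 0 != 0)); last first.
  move=> hno; apply: e0CE => k.
  by case: (eqVneq (B k 1 0) 0) => // h; case: hno; exists k.
move=> [k hk].
have hgk : gfun (B j0) (B k) = 0.
  by apply/eqP; have := hg k; move/eqP; rewrite mulf_eq0 (negbTE hk).
exists (vec2 (B j0 0 1) (- (B j0 0 0 - B j0 1 1))); split.
  by apply: vec2_neq0; rewrite oppr_eq0.
move=> l; apply: eig_cross; first by apply: vec2_neq0; rewrite oppr_eq0.
apply/eqP; rewrite -subr_eq0 cross_g oppr_eq0; apply/eqP.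
apply: contra_eq (hd k l) => hgl.
have hl0 : B l 1 0 = 0.
  by apply/eqP; have := hg l; move/eqP; rewrite mulf_eq0 (negbTE hgl) orbF.
have := del_up (B k) hX hl0.
move=> hdel; apply/eqP => h0; move: hdel; rewrite h0 mulr0 => /esym/eqP.
by rewrite mulf_eq0 (negbTE hk) (negbTE hgl).
Qed.

Lemma eig_exists M : exists u : 'cV[C]_2, u != 0 /\ exists l, M *m u = l *: u.
Proof.
case: (eqVneq (M 1 0) 0) => h.
  by exists e0; split; [exact: e0_neq0|exact: e0_eig].
pose s := sqrtC ((M 0 0 - M 1 1) ^+ 2 + 4 * M 0 1 * M 1 0).
have hs : s ^+ 2 = (M 0 0 - M 1 1) ^+ 2 + 4 * M 0 1 * M 1 0 by rewrite sqrtCK.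
pose l := (M 0 0 + M 1 1 + s) / 2.
exists (vec2 (l - M 1 1) (M 1 0)); split; first exact: vec2_neq0.
apply: eig_cross; first exact: vec2_neq0.
apply/eqP; rewrite -subr_eq0; apply/eqP.
rewrite !mul2E !mxE /=.
have -> : (M 0 0 * (l - M 1 1) + M 0 1 * M 1 0) * M 1 0 -
    (M 1 0 * (l - M 1 1) + M 1 1 * M 1 0) * (l - M 1 1)
  = - M 1 0 / 4 * (s ^+ 2 - ((M 0 0 - M 1 1) ^+ 2 + 4 * M 0 1 * M 1 0)).
  by rewrite /l; field; rewrite ?pnatr_eq0.
by rewrite hs subrr mulr0.
Qed.

End Alg4.
Section Alg5.
Variable R : realType.
Local Notation C := R[i].

Lemma scalar_conj (P M : 'M[C]_2) (a : C) : P \in unitmx ->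
  P *m M *m invmx P = a%:M -> M = a%:M.
Proof.
move=> hP h.
have -> : M = invmx P *m (P *m M *m invmx P) *m P.
  by rewrite !mulmxA mulVmx // mul1mx mulmxKV.
by rewrite h scalar_mxC -mulmxA mulVmx // mulmx1.
Qed.

Lemma inv_CE n (A : Vn R n) :
  CE A <-> (forall j k l, sigmaV A j k = 0 /\ DeltaV A j k l = 0).
Proof.
split.
  move/UT_CE => [B [[P hP hB] hU]] j k l.
  have hBi i : B i = P *m A i *m invmx P by rewrite -hB.
  have hU' i : B i 1 0 = 0 by have := hU i; rewrite /upper_tri2V lift00 ord0E.
  rewrite sigmaE DeltaE -(sig_conj _ _ hP) -(del_conj _ _ _ hP) -!hBi.
  by rewrite sig_ut // del_ut // expr0n.
move=> hinv.
case: (pselect (exists j, ~ [/\ A j 0 1 = 0, A j 1 0 = 0 & A j 0 0 = A j 1 1])).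
  move=> [j0 hj0].
  have [u [un [l hl]]] := eig_exists (A j0).
  pose P := invmx (Qof u).
  have hP : P \in unitmx by rewrite unitmx_inv Qof_unit.
  apply: (CE_conj hP).
  have hX : (P *m A j0 *m invmx P) 1 0 = 0.
    by rewrite /P invmxK (conj_up un hl).
  apply: (@up_CE _ _ _ j0) => //.
  - case: (eqVneq ((P *m A j0 *m invmx P) 0 1) 0) => h01; last by left.
    case: (eqVneq ((P *m A j0 *m invmx P) 0 0) ((P *m A j0 *m invmx P) 1 1)) => h; last by right.
    exfalso; apply: hj0.
    have hs : P *m A j0 *m invmx P = ((P *m A j0 *m invmx P) 0 0)%:M.
      apply/matrixP => i j; rewrite [RHS]mxE.
      by case: (ord2P i) => ->; case: (ord2P j) => -> //=; rewrite ?h01 ?hX.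
    by rewrite (scalar_conj hP hs) !mxE.
  - by move=> k; rewrite sig_conj // -sigmaE; case: (hinv j0 k k).
  - move=> k l0; rewrite del_conj //; case: (hinv j0 k l0) => _.
    by rewrite DeltaE => /eqP; rewrite expf_eq0 /= => /eqP.
move=> hall; exists e0; split; first exact: e0_neq0.
move=> i; apply: e0_eig.
case: (pselect ([/\ A i 0 1 = 0, A i 1 0 = 0 & A i 0 0 = A i 1 1])) => [[] //|h].
by case: hall; exists i.
Qed.

End Alg5.
Lemma cont_ptws (X T : topologicalType) (I : Type) (f : X -> {ptws I -> T}) :
  (forall i, continuous (fun x => f x i)) -> continuous f.
Proof.
move=> hf x; apply/cvg_sup => i.
exact: (@continuous_comp_initial _ X _ (fun g : I -> T => g i) f (hf i) x).
Qed.

Lemma proj_cont (I : eqType) (T : topologicalType) (i : I) :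
  continuous (fun g : {ptws I -> T} => g i).
Proof. exact: proj_continuous. Qed.

Section Topo.
Variable R : realType.
Local Notation C := R[i].

Lemma cont_mx (X : topologicalType) m n (f : X -> 'M[C]_(m, n)) :
  (forall i j, continuous (fun x => f x i j)) -> continuous f.
Proof.
move=> hf x; apply/cvg_ballP => e e0.
have : \forall y \near x, forall i j, ball (f x i j) e (f y i j).
  apply: filter_forall => i; apply: filter_forall => j.
  by have := hf i j x; move/cvg_ballP => /(_ e e0).
by apply: filterS => y hy; split.
Qed.

Lemma cont_entry (X : topologicalType) m n i j (f : X -> 'M[C]_(m, n)) :
  continuous f -> continuous (fun x => f x i j).
Proof.
move=> hf x; apply: (@continuous_comp _ _ _ f (fun M : 'M[C]_(m, n) => M i j)).
  exact: hf.
exact: coord_continuous.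
Qed.

Lemma contD (X : topologicalType) (f g : X -> C) :
  continuous f -> continuous g -> continuous (fun x => f x + g x).
Proof. by move=> hf hg x; have := (@continuousD C C^o X f g x (hf x) (hg x)); exact. Qed.
Lemma contM (X : topologicalType) (f g : X -> C) :
  continuous f -> continuous g -> continuous (fun x => f x * g x).
Proof. by move=> hf hg x; have := (@continuousM C X f g x (hf x) (hg x)); exact. Qed.
Lemma contN (X : topologicalType) (f : X -> C) :
  continuous f -> continuous (fun x => - f x).
Proof.
move=> hf.
have -> : (fun x => - f x) = (fun x => (fun _ => -1) x * f x).
  by apply: funext => x; rewrite mulN1r.
have hc : continuous (fun _ : X => (-1 : C)) by move=> y; exact: cst_continuous.
exact: (contM hc hf).
Qed.
Lemma contB (X : topologicalType) (f g : X -> C) :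
  continuous f -> continuous g -> continuous (fun x => f x - g x).
Proof. move=> hf hg. exact: (contD hf (contN hg)). Qed.

Lemma cont_mulmx (X : topologicalType) (f g : X -> 'M[C]_2) :
  continuous f -> continuous g -> continuous (fun x => f x *m g x).
Proof.
move=> hf hg; apply: cont_mx => i j.
have -> : (fun x => (f x *m g x) i j) =
    (fun x => f x i 0 * g x 0 j + f x i 1 * g x 1 j).
  by apply: funext => x; rewrite mul2E.
apply: contD; apply: contM; exact: cont_entry.
Qed.

Lemma cont_adj (X : topologicalType) (f : X -> 'M[C]_2) :
  continuous f -> continuous (fun x => \adj (f x)).
Proof.
move=> hf; apply: cont_mx => i j.
have -> : (fun x => \adj (f x) i j) = (fun x =>
  if i == 0 then (if j == 0 then f x 1 1 else - f x 0 1)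
  else (if j == 0 then - f x 1 0 else f x 0 0)).
  by apply: funext => x; rewrite adj2.
by case: (i == 0); case: (j == 0); rewrite ?[fun x => - _]/(fun x => - _);
  try apply: contN; apply: cont_entry.
Qed.

Lemma cont_det (X : topologicalType) (f : X -> 'M[C]_2) :
  continuous f -> continuous (fun x => \det (f x)).
Proof.
move=> hf.
have -> : (fun x => \det (f x)) =
    (fun x => f x 0 0 * f x 1 1 - f x 0 1 * f x 1 0).
  by apply: funext => x; rewrite det2.
by apply: contB; apply: contM; apply: cont_entry.
Qed.

Lemma normC_real (t : R) : `|(t%:C)%C| = (`|t|%:C)%C.
Proof. by rewrite normc_def /= expr0n addr0 sqrtr_sqr. Qed.

Lemma pos_Im (e : C) : 0 < e -> complex.Im e = 0 /\ 0 < complex.Re e.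
Proof. by rewrite ltcE /= => /andP [/eqP -> ->]. Qed.

Lemma cont_RC : continuous (fun x : R => (x%:C)%C).
Proof.
move=> x; apply/cvg_ballP => e e0.
have [eI eR] := pos_Im e0.
apply: (filterS _ (nbhsx_ballx x _ eR)) => y hy.
rewrite /ball /= -rmorphB normC_real ltcE /= eI eqxx /=.
by move: hy; rewrite /ball /=.
Qed.

End Topo.
Section Topo2.
Variable R : realType.
Local Notation C := R[i].

Definition SQ (r : R) : set C :=
  [set z | `|complex.Re z| <= r /\ `|complex.Im z| <= r].

Definition phi (v : 'rV[R]_2) : C := ((v ord0 0)%:C + 'i * (v ord0 1)%:C)%C.

Lemma phiE (a b : R) : ((a%:C + 'i * b%:C)%C : C) = (a +i* b)%C.
Proof. by rewrite [RHS]complexE /=. Qed.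

Lemma cont_phi : continuous phi.
Proof.
have h0 : continuous (fun v : 'rV[R]_2 => ((v ord0 0)%:C)%C).
  move=> v; exact: (@continuous_comp _ _ _ (fun v : 'rV[R]_2 => v ord0 0)
    (fun t : R => (t%:C)%C) v (@coord_continuous R 1 2 ord0 0 v) (@cont_RC R _)).
have h1 : continuous (fun v : 'rV[R]_2 => ((v ord0 1)%:C)%C).
  move=> v; exact: (@continuous_comp _ _ _ (fun v : 'rV[R]_2 => v ord0 1)
    (fun t : R => (t%:C)%C) v (@coord_continuous R 1 2 ord0 1 v) (@cont_RC R _)).
have hc : continuous (fun _ : 'rV[R]_2 => ('i%C : C)) by move=> y; exact: cst_continuous.
exact: (contD h0 (contM hc h1)).
Qed.

Lemma compact_SQ r : compact (SQ r).
Proof.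
have hQ : compact [set v : 'rV[R]_2 | forall i, `[-r, r]%classic (v ord0 i)].
  exact: (@rV_compact R 2 (fun _ => `[-r, r]%classic) (fun _ => @segment_compact R (-r) r)).
have -> : SQ r = phi @` [set v : 'rV[R]_2 | forall i, `[-r, r]%classic (v ord0 i)].
  apply/seteqP; split.
    move=> z [hr hi]; exists (\row_(i < 2) (if i == 0 then complex.Re z else complex.Im z)).
      move=> i; rewrite /= in_itv /= -ler_norml mxE.
      by case: (ord2P i) => -> /=.
    by rewrite /phi !mxE /= phiE; case: z {hr hi}.
  move=> _ [v hv <-]; rewrite /SQ /phi phiE /=.
  by split; rewrite ler_norml; have := hv 0; have := hv 1; rewrite /= !in_itv /=.
apply: continuous_compact => //; apply: continuous_subspaceT; exact: cont_phi.
Qed.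

Definition MB (r : R) : set 'M[C]_2 := [set M | forall i j, SQ r (M i j)].

Lemma compact_MB r : compact (MB r).
Proof.
have hQ : compact [set v : 'rV[C]_(2 * 2) | forall k, SQ r (v ord0 k)].
  exact: (@rV_compact C (2 * 2) (fun _ => SQ r) (fun _ => @compact_SQ r)).
have hc : continuous (fun v : 'rV[C]_(2 * 2) => (vec_mx v : 'M[C]_2)).
  apply: cont_mx => i j.
  have -> : (fun v : 'rV[C]_(2 * 2) => (vec_mx v : 'M[C]_2) i j) =
      (fun v => v ord0 (mxvec_index i j)) by apply: funext => v; rewrite mxE.
  exact: coord_continuous.
have -> : MB r = (fun v : 'rV[C]_(2 * 2) => (vec_mx v : 'M[C]_2)) @`
    [set v : 'rV[C]_(2 * 2) | forall k, SQ r (v ord0 k)].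
  apply/seteqP; split.
    move=> M hM; exists (mxvec M); last exact: mxvecK.
    by move=> k; case: (mxvec_indexP k) => i j; rewrite mxvecE.
  by move=> _ [v hv <-] i j; rewrite mxE.
apply: continuous_compact => //; apply: continuous_subspaceT; exact: hc.
Qed.

Lemma compact_VB n r :
  compact [set B : {ptws 'I_n -> 'M[C]_2} | forall i, MB r (B i)].
Proof. exact: (@tychonoff _ (fun _ => 'M[C]_2) (fun _ => MB r) (fun _ => @compact_MB r)). Qed.

Lemma real_normc (z : C) : (`|z| : C) = ((complex.Re `|z|)%:C)%C.
Proof. by rewrite RRe_real // normr_real. Qed.

Lemma cpt_bnd (X : ptopologicalType) (A : set X) (h : X -> C) :
  compact A -> continuous h -> exists N : nat, forall x, A x -> `|h x| < N%:R.
Proof.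
rewrite compact_cover => cA hh.
have op : forall k : nat, [set: nat] k -> open (h @^-1` [set z : C | `|z| < k.+1%:R]).
  move=> k _; move/continuousP : hh; apply.
  have -> : [set z : C | `|z| < k.+1%:R] = ball (0 : C) k.+1%:R.
    by apply/seteqP; split => z; rewrite /ball /= sub0r normrN.
  exact: (@ball_open _ C^o).
have cov : A `<=` \bigcup_(k in [set: nat]) (h @^-1` [set z : C | `|z| < k.+1%:R]).
  move=> x _; set t := complex.Re `|h x|.
  have t0 : 0 <= t.
    by rewrite -lecR /t -real_normc rmorph0 normr_ge0.
  exists (Num.Def.archi_bound t) => //=.
  rewrite real_normc -[_.+1%:R](rmorph_nat (real_complex R)) ltcR.
  by apply: lt_le_trans (archi_boundP t0) _; rewrite ler_nat.
have [D' _ hD'] := cA _ _ _ op cov.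
exists (\max_(k <- finmap.enum_fset D') k).+1 => x /hD' [k hk /= hkx].
apply: lt_le_trans hkx _; rewrite ler_nat ltnS.
exact: leq_bigmax_seq.
Qed.

End Topo2.
Section Norm.
Variable R : realType.
Local Notation C := R[i].
Implicit Types M N : 'M[C]_2.

Definition mnorm M : C := \sum_i \sum_j `|M i j|.

Lemma mnormE M : mnorm M = `|M 0 0| + `|M 0 1| + (`|M 1 0| + `|M 1 1|).
Proof. by rewrite /mnorm !sum2. Qed.

Lemma mnorm_ge0 M : 0 <= mnorm M.
Proof. by rewrite mnormE !addr_ge0. Qed.

Lemma mnorm_entry M i j : `|M i j| <= mnorm M.
Proof.
rewrite mnormE.
have h := normr_ge0.
case: (ord2P i) => ->; case: (ord2P j) => ->.
- by rewrite -addrA lerDl !addr_ge0.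
- by rewrite -addrA [`|M 0 0| + _]addrC -addrA lerDl !addr_ge0.
- by rewrite addrC -addrA lerDl !addr_ge0.
- by rewrite addrC [`|M 1 0| + _]addrC -addrA lerDl !addr_ge0.
Qed.

Lemma mnormD M N : mnorm (M + N) <= mnorm M + mnorm N.
Proof.
rewrite !mnormE !mxE.
have -> : `|M 0 0| + `|M 0 1| + (`|M 1 0| + `|M 1 1|) +
   (`|N 0 0| + `|N 0 1| + (`|N 1 0| + `|N 1 1|)) =
   (`|M 0 0| + `|N 0 0|) + (`|M 0 1| + `|N 0 1|) +
   ((`|M 1 0| + `|N 1 0|) + (`|M 1 1| + `|N 1 1|)) by ring.
by apply: lerD; apply: lerD; apply: ler_normD.
Qed.

Lemma mnormN M : mnorm (- M) = mnorm M.
Proof. by rewrite !mnormE !mxE !normrN. Qed.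

Lemma mnormB M N : mnorm (M - N) <= mnorm M + mnorm N.
Proof. by rewrite -(mnormN N); exact: mnormD. Qed.

Lemma mnormZ (a : C) M : mnorm (a *: M) = `|a| * mnorm M.
Proof. by rewrite !mnormE !mxE !normrM; ring. Qed.

Lemma mnorm1 : mnorm (1%:M : 'M[C]_2) = 2.
Proof. by rewrite mnormE !mxE /= normr1 normr0 addr0 add0r. Qed.

Lemma mnormM M N : mnorm (M *m N) <= mnorm M * mnorm N.
Proof.
rewrite !mnormE !mul2E.
set m00 := `|M 0 0|; set m01 := `|M 0 1|; set m10 := `|M 1 0|; set m11 := `|M 1 1|.
set n00 := `|N 0 0|; set n01 := `|N 0 1|; set n10 := `|N 1 0|; set n11 := `|N 1 1|.
have tri (a b c d : C) : `|a * b + c * d| <= `|a| * `|b| + `|c| * `|d|.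
  by rewrite -!normrM; exact: ler_normD.
apply: le_trans (_ : m00 * n00 + m01 * n10 + (m00 * n01 + m01 * n11) +
  ((m10 * n00 + m11 * n10) + (m10 * n01 + m11 * n11)) <= _).
  by apply: lerD; apply: lerD; apply: tri.
have -> : (m00 + m01 + (m10 + m11)) * (n00 + n01 + (n10 + n11)) =
  m00 * n00 + m01 * n10 + (m00 * n01 + m01 * n11) +
  ((m10 * n00 + m11 * n10) + (m10 * n01 + m11 * n11)) +
  (m00 * n10 + m00 * n11 + m01 * n00 + m01 * n01 +
   (m10 * n10 + m10 * n11 + m11 * n00 + m11 * n01)) by ring.
rewrite lerDl.
by rewrite /m00 /m01 /m10 /m11 /n00 /n01 /n10 /n11 !addr_ge0 // mulr_ge0.
Qed.

Lemma cont_normC : continuous (fun z : C => `|z| : C).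
Proof.
move=> z; have := (@norm_continuous C C^o z); exact.
Qed.

Lemma cont_norm_entry (X : topologicalType) (f : X -> 'M[C]_2) i j :
  continuous f -> continuous (fun x => `|f x i j| : C).
Proof.
move=> hf x.
have := (@continuous_comp _ _ _ (fun x => f x i j) (fun z : C => `|z| : C) x
  (@cont_entry R X 2 2 i j f hf x) (@cont_normC (f x i j))); exact.
Qed.

Lemma cont_mnorm (X : topologicalType) (f : X -> 'M[C]_2) :
  continuous f -> continuous (fun x => mnorm (f x)).
Proof.
move=> hf.
have -> : (fun x => mnorm (f x)) = (fun x => `|f x 0 0| + `|f x 0 1| + (`|f x 1 0| + `|f x 1 1|)).
  by apply: funext => x; rewrite mnormE.
by apply: contD; apply: contD; apply: cont_norm_entry.
Qed.

End Norm.
Section Stab1.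
Variable R : realType.
Local Notation C := R[i].
Implicit Types X Y Z M g : 'M[C]_2.

Lemma adjmul_det1 g : \det g = 1 -> \adj g *m g = 1%:M.
Proof. by move=> h; rewrite mul_adj_mx h. Qed.
Lemma muladj_det1 g : \det g = 1 -> g *m \adj g = 1%:M.
Proof. by move=> h; rewrite mul_mx_adj h. Qed.

Lemma invmx_det1 g : \det g = 1 -> invmx g = \adj g.
Proof.
move=> h; have hu : g \in unitmx by rewrite unitmxE h unitr1.
by rewrite -[invmx g]mulmx1 -(muladj_det1 h) mulmxA mulVmx // mul1mx.
Qed.

Definition cg g X := g *m X *m \adj g.

Lemma cgM g X Y : \det g = 1 -> cg g (X *m Y) = cg g X *m cg g Y.
Proof.
move=> h; rewrite /cg !mulmxA -[g *m X *m \adj g *m g]mulmxA adjmul_det1 //.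
by rewrite mulmx1.
Qed.

Lemma cgB g X Y : cg g (X - Y) = cg g X - cg g Y.
Proof. by rewrite /cg mulmxBr mulmxBl. Qed.

Lemma cgD g X Y : cg g (X + Y) = cg g X + cg g Y.
Proof. by rewrite /cg mulmxDr mulmxDl. Qed.

Lemma cgZ g (a : C) X : cg g (a *: X) = a *: cg g X.
Proof. by rewrite /cg -scalemxAr -scalemxAl. Qed.

Lemma cg1 g : \det g = 1 -> cg g 1%:M = 1%:M.
Proof. by move=> h; rewrite /cg mulmx1 muladj_det1. Qed.

Lemma del_comm X Y : del X Y (X *m Y - Y *m X) = 2 * sig X Y.
Proof.
rewrite /del /sig !tr2 !mul2E !mxE ?sum2.
by field; rewrite ?pnatr_eq0.
Qed.

Lemma span2 (P1 P2 P3 E : 'M[C]_2) :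
 (2 * del P1 P2 P3) *: E =
  (del P1 P2 P3 * \tr E - \tr (E *m (P2 *m P3 - P3 *m P2)) * \tr P1
   - \tr (E *m (P3 *m P1 - P1 *m P3)) * \tr P2
   - \tr (E *m (P1 *m P2 - P2 *m P1)) * \tr P3) *: 1%:M
  + (2 * \tr (E *m (P2 *m P3 - P3 *m P2))) *: P1
  + (2 * \tr (E *m (P3 *m P1 - P1 *m P3))) *: P2
  + (2 * \tr (E *m (P1 *m P2 - P2 *m P1))) *: P3.
Proof.
apply/matrixP => i j; rewrite /del !tr2.
rewrite !mul2E !mxE ?sum2.
by case: (ord2P i) => ->; case: (ord2P j) => -> /=; ring.
Qed.

Definition fl (a : 'I_2) : 'I_2 := if a == 0 then 1 else 0.

Lemma entry_sq g x a :
  (g *m delta_mx a (fl a) *m \adj g) x (fl x) =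
  (if x == a then 1 else -1) * g x a ^+ 2.
Proof.
by case: (ord2P x) => ->; case: (ord2P a) => ->; rewrite !mul2E !adj2 !mxE /=; ring.
Qed.

Lemma norm_entry_sq g x a :
  `|(cg g (delta_mx a (fl a))) x (fl x)| = `|g x a| ^+ 2.
Proof.
rewrite /cg entry_sq normrM normrX.
by case: (x == a); rewrite ?normrN normr1 mul1r.
Qed.

Lemma sq_bound (u G : C) : 0 <= u -> u ^+ 2 <= G -> u <= 1 + G.
Proof.
move=> u0 hG; have G0 : 0 <= G := le_trans (exprn_ge0 2 u0) hG.
case/orP: (real_leVge (ger0_real u0) (@real1 C)) => hu.
  by apply: le_trans hu _; rewrite lerDl.
apply: le_trans (_ : G <= 1 + G); last by rewrite lerDr.
apply: le_trans hG; rewrite expr2 -{1}[u]mul1r.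
by apply: ler_wpM2r.
Qed.

Lemma normle_SQ (z rho : C) : 0 <= rho -> `|z| <= rho -> SQ (complex.Re rho) z.
Proof.
move=> r0; rewrite -(RRe_real (ger0_real r0)) normc_def lecR => h.
rewrite /SQ; case: z h => a b /= h; split; apply: le_trans h.
  rewrite -sqrtr_sqr ler_wsqrtr // lerDl sqr_ge0 //.
rewrite -sqrtr_sqr ler_wsqrtr // lerDr sqr_ge0 //.
Qed.

End Stab1.
Section Stab2.
Variable R : realType.
Local Notation C := R[i].

Lemma mnormD4 (U V W Z : 'M[C]_2) :
  mnorm (U + V + W + Z) <= mnorm U + mnorm V + mnorm W + mnorm Z.
Proof.
apply: le_trans (mnormD _ _) _; rewrite lerD2r.
apply: le_trans (mnormD _ _) _; rewrite lerD2r.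
exact: mnormD.
Qed.

Lemma bound_g (P1 P2 P3 : 'M[C]_2) (beta : C) : del P1 P2 P3 != 0 -> 0 <= beta ->
  exists Gam : C, 0 <= Gam /\ forall g : 'M[C]_2, \det g = 1 ->
   mnorm (cg g P1) <= beta -> mnorm (cg g P2) <= beta -> mnorm (cg g P3) <= beta ->
   forall x a, `|g x a| <= 1 + Gam.
Proof.
move=> hd b0.
pose a0 E := del P1 P2 P3 * \tr E - \tr (E *m (P2 *m P3 - P3 *m P2)) * \tr P1
   - \tr (E *m (P3 *m P1 - P1 *m P3)) * \tr P2
   - \tr (E *m (P1 *m P2 - P2 *m P1)) * \tr P3.
pose a1 E := 2 * \tr (E *m (P2 *m P3 - P3 *m P2)).
pose a2 E := 2 * \tr (E *m (P3 *m P1 - P1 *m P3)).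
pose a3 E := 2 * \tr (E *m (P1 *m P2 - P2 *m P1)).
pose gam E := (`|a0 E| * 2 + (`|a1 E| + `|a2 E| + `|a3 E|) * beta) / `|2 * del P1 P2 P3|.
have gam0 E : 0 <= gam E.
  by rewrite /gam divr_ge0 // addr_ge0 // mulr_ge0 // ?addr_ge0.
have dpos : 0 < `|2 * del P1 P2 P3| by rewrite normr_gt0 mulf_neq0 // two_neq0.
have key (c0 c1 c2 c3 m1 m2 m3 : C) : 0 <= c1 -> 0 <= c2 -> 0 <= c3 ->
    m1 <= beta -> m2 <= beta -> m3 <= beta ->
    c0 * 2 + c1 * m1 + c2 * m2 + c3 * m3 <= c0 * 2 + (c1 + c2 + c3) * beta.
  move=> h1 h2 h3 k1 k2 k3; rewrite mulrDl mulrDl -!addrA lerD2l.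
  by apply: lerD; [apply: ler_wpM2l|apply: lerD; apply: ler_wpM2l].
have hE g E : \det g = 1 ->
   mnorm (cg g P1) <= beta -> mnorm (cg g P2) <= beta -> mnorm (cg g P3) <= beta ->
   mnorm (cg g E) <= gam E.
  move=> hg h1 h2 h3.
  rewrite /gam ler_pdivlMr // mulrC -mnormZ -cgZ span2 !cgD !cgZ cg1 //.
  apply: le_trans (mnormD4 _ _ _ _) _.
  rewrite !mnormZ mnorm1; apply: key => //.
exists (gam (delta_mx 0 (fl 0)) + gam (delta_mx 1 (fl 1))); split.
  by apply: addr_ge0.
move=> g hg h1 h2 h3 x a.
apply: sq_bound; first exact: normr_ge0.
rewrite -(norm_entry_sq g x a).
apply: le_trans (mnorm_entry (cg g (delta_mx a (fl a))) x (fl x)) _.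
apply: le_trans (hE g _ hg h1 h2 h3) _.
by case: (ord2P a) => ->; [rewrite lerDl | rewrite lerDr].
Qed.

End Stab2.
Section Stab3.
Variable R : realType.
Local Notation C := R[i].

Lemma closed_SL2 : closed (SL2 R).
Proof.
have hC : hausdorff_space C by exact: (@norm_hausdorff C C^o).
have c1 : closed [set (1 : C)] := @accessible_closed_set1 _ (hausdorff_accessible hC) 1.
have hd : continuous (fun g : 'M[C]_2 => \det g).
  by apply: cont_det => x; exact: cvg_id.
exact: ((continuous_closedP _).1 hd _ c1).
Qed.

Lemma notCE_stable n (A : Vn R n) : ~ CE A -> stableV A.
Proof.
move=> hn K cK.
have [rho [rho0 hrho]] : exists rho : C, 0 <= rho /\
    forall B, K B -> forall i, mnorm (B i) <= rho.
  have hi : forall i : 'I_n, exists N : nat, forall B, K B -> `|mnorm (B i)| < N%:R.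
    move=> i.
    have cKi : compact ((fun B : {ptws 'I_n -> 'M[C]_2} => B i) @` K).
      apply: continuous_compact cK; apply: continuous_subspaceT; exact: proj_cont.
    have hid : continuous (fun g : 'M[C]_2 => g) by move=> x; exact: cvg_id.
    have [N hN] := cpt_bnd cKi (cont_mnorm hid).
    by exists N => B KB; apply: hN; exists B.
  case: (choice hi) => N hN.
  exists (\max_i N i)%:R; split; first exact: ler0n.
  move=> B KB i; rewrite -(ger0_norm (mnorm_ge0 (B i))).
  apply/ltW/(lt_le_trans (hN i B KB)); rewrite ler_nat; exact: leq_bigmax.
pose beta := rho + 2 * rho ^+ 2.
have rb : rho <= beta by rewrite lerDl mulr_ge0 // exprn_ge0.
have b0 : 0 <= beta := le_trans rho0 rb.
have [P1 [P2 [P3 [hd good]]]] : exists P1 P2 P3 : 'M[C]_2, del P1 P2 P3 != 0 /\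
   forall g, \det g = 1 -> (forall i, mnorm (cg g (A i)) <= rho) ->
   [/\ mnorm (cg g P1) <= beta, mnorm (cg g P2) <= beta & mnorm (cg g P3) <= beta].
  have : ~ (forall j k l, sigmaV A j k = 0 /\ DeltaV A j k l = 0).
    by move=> h; apply: hn; apply/inv_CE.
  rewrite -existsNE => -[j]; rewrite -existsNE => -[k]; rewrite -existsNE => -[l].
  case/not_andP => h.
    exists (A j), (A k), (A j *m A k - A k *m A j); split.
      rewrite del_comm mulf_neq0 ?two_neq0 //; apply/eqP => h0; apply: h.
      by rewrite sigmaE.
    move=> g hg hA; split; rewrite ?(le_trans (hA _) rb) //.
    rewrite cgB !cgM //; apply: le_trans (mnormB _ _) _.
    have hjk : mnorm (cg g (A j) *m cg g (A k)) <= rho * rho.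
      by apply: le_trans (mnormM _ _) _; apply: ler_pM => //; apply: mnorm_ge0.
    have hkj : mnorm (cg g (A k) *m cg g (A j)) <= rho * rho.
      by apply: le_trans (mnormM _ _) _; apply: ler_pM => //; apply: mnorm_ge0.
    apply: le_trans (lerD hjk hkj) _.
    have -> : rho * rho + rho * rho = 2 * rho ^+ 2 by ring.
    by rewrite /beta lerDr.
  exists (A j), (A k), (A l); split.
    by apply/eqP => h0; apply: h; rewrite DeltaE h0 expr0n.
  by move=> g hg hA; split; apply: le_trans (hA _) rb.
have [Gam [Gam0 hGam]] := bound_g hd b0.
pose S := SL2 R `&` (fun g => conj_actV g A) @^-1` K.
have conjE g : \det g = 1 -> conj_actV g A = (fun i => cg g (A i)).
  by move=> hg; apply: funext => i; rewrite /conj_actV /cg invmx_det1.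
have hS : S `<=` MB (complex.Re (1 + Gam)).
  move=> g [hg Kg] x a; apply: normle_SQ; first by rewrite addr_ge0.
  have hA : forall i, mnorm (cg g (A i)) <= rho.
    by move=> i; have := hrho _ Kg i; rewrite (conjE g hg).
  have [h1 h2 h3] := good g hg hA.
  exact: hGam.
have cS : closed S.
  have -> : S = SL2 R `&` (fun g : 'M[C]_2 =>
      ((fun i => cg g (A i)) : {ptws 'I_n -> 'M[C]_2})) @^-1` K.
    apply/seteqP; split => g [hg Kg]; split => //.
      by move: Kg; rewrite /= (conjE g hg).
    by rewrite /= (conjE g hg).
  apply: closedI; first exact: closed_SL2.
  have hH : hausdorff_space {ptws 'I_n -> 'M[C]_2}.
    by apply: hausdorff_product => _; exact: norm_hausdorff.
  have hid : continuous (fun g : 'M[C]_2 => g) by move=> x; exact: cvg_id.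
  have hF : continuous (fun g : 'M[C]_2 =>
      ((fun i => cg g (A i)) : {ptws 'I_n -> 'M[C]_2})).
    apply: cont_ptws => i; rewrite /cg.
    have hc : continuous (fun g : 'M[C]_2 => A i) by move=> x; exact: cst_continuous.
    exact: (cont_mulmx (cont_mulmx hid hc) (cont_adj hid)).
  exact: ((continuous_closedP _).1 hF K (compact_closed hH cK)).
exact: (subclosed_compact cS (@compact_MB R (complex.Re (1 + Gam))) hS).
Qed.

End Stab3.
Section Stab4.
Variable R : realType.
Local Notation C := R[i].

Definition dgm (a b : C) : 'M[C]_2 := \matrix_(i, j)
  (if i == 0 then (if j == 0 then a else 0) else (if j == 0 then 0 else b)).

Lemma dgmM a b c d : dgm a b *m dgm c d = dgm (a * c) (b * d).
Proof.
apply/matrixP => i j; rewrite mul2E !mxE.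
by case: (ord2P i) => ->; case: (ord2P j) => -> /=; ring.
Qed.

Lemma dgm11 : dgm 1 1 = 1%:M.
Proof.
by apply/matrixP => i j; rewrite !mxE; case: (ord2P i) => ->; case: (ord2P j) => ->.
Qed.

Lemma dgm_split (s : C) : dgm s s^-1 = s *: dgm 1 0 + s^-1 *: dgm 0 1.
Proof.
apply/matrixP => i j; rewrite !mxE.
by case: (ord2P i) => ->; case: (ord2P j) => -> /=; ring.
Qed.

Lemma dgm_conj_norm (s : C) (X : 'M[C]_2) : s != 0 -> `|s| <= 1 -> X 1 0 = 0 ->
  mnorm (dgm s s^-1 *m X *m dgm s^-1 s) <= mnorm X.
Proof.
move=> s0 s1 hX.
set Y := dgm s s^-1 *m X *m dgm s^-1 s.
have e00 : Y 0 0 = X 0 0 by rewrite /Y !mul2E !mxE /=; field.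
have e01 : Y 0 1 = s ^+ 2 * X 0 1 by rewrite /Y !mul2E !mxE /=; field.
have e10 : Y 1 0 = 0 by rewrite /Y !mul2E !mxE /= hX; ring.
have e11 : Y 1 1 = X 1 1 by rewrite /Y !mul2E !mxE /=; field.
rewrite !mnormE e00 e01 e10 e11 normr0 normrM normrX.
apply: lerD; first apply: lerD => //.
  by apply: ler_piMl => //; apply: exprn_ile1.
by apply: lerD.
Qed.

Lemma le_sum_mnorm n (B : 'I_n -> 'M[C]_2) i : mnorm (B i) <= \sum_k mnorm (B k).
Proof.
rewrite (bigD1 i) //= lerDl; apply: sumr_ge0 => k _; exact: mnorm_ge0.
Qed.

Lemma mnormM3 (X Y Z : 'M[C]_2) : mnorm (X *m Y *m Z) <= mnorm X * mnorm Y * mnorm Z.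
Proof.
apply: le_trans (mnormM _ _) _; apply: ler_wpM2r; first exact: mnorm_ge0.
exact: mnormM.
Qed.

Lemma conj_assoc (Q D P X D' : 'M[C]_2) :
  Q *m D *m P *m X *m (Q *m D' *m P) = Q *m (D *m (P *m X *m Q) *m D') *m P.
Proof. by rewrite !mulmxA. Qed.

Lemma stable_notCE n (A : Vn R n) : stableV A -> ~ CE A.
Proof.
move=> hst hce.
have [B [[P hP hB] hU]] := (UT_CE A).2 hce.
have hB10 i : B i 1 0 = 0 by have := hU i; rewrite /upper_tri2V lift00 ord0E.
have hBi i : B i = P *m A i *m invmx P by rewrite -hB.
pose gs (s : C) := invmx P *m dgm s s^-1 *m P.
have gs_inv s : s != 0 -> gs s *m (invmx P *m dgm s^-1 s *m P) = 1%:M.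
  move=> s0; rewrite /gs -!mulmxA (mulmxA P) mulmxV // mul1mx.
  by rewrite (mulmxA (dgm s s^-1)) dgmM mulfV // mulVf // dgm11 mul1mx mulVmx.
have gs_invmx s : s != 0 -> invmx (gs s) = invmx P *m dgm s^-1 s *m P.
  move=> s0; have h := gs_inv s s0; have [hu _] := mulmx1_unit h.
  by rewrite -[invmx _]mulmx1 -h mulmxA mulVmx // mul1mx.
have dP : \det P != 0 by rewrite -unitfE -unitmxE.
have gs_det s : s != 0 -> \det (gs s) = 1.
  move=> s0; rewrite /gs !det_mulmx det_inv.
  have -> : \det (dgm s s^-1) = 1 by rewrite det2 !mxE /= mulfV // mul0r subr0.
  by rewrite mulr1 mulVf.
have gs_conj s : s != 0 -> conj_actV (gs s) A =
    (fun i => invmx P *m (dgm s s^-1 *m B i *m dgm s^-1 s) *m P).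
  move=> s0; apply: funext => i; rewrite /conj_actV gs_invmx // hBi.
  exact: conj_assoc.
pose rho0 := mnorm (invmx P) * (\sum_k mnorm (B k)) * mnorm P.
have rho00 : 0 <= rho0.
  by rewrite /rho0 !mulr_ge0 ?mnorm_ge0 // sumr_ge0 // => k _; exact: mnorm_ge0.
pose K := [set B' : {ptws 'I_n -> 'M[C]_2} | forall i, MB (complex.Re rho0) (B' i)].
have cK : compact K := @compact_VB R n (complex.Re rho0).
have cS := hst K cK.
have hid : continuous (fun g : 'M[C]_2 => g) by move=> x; exact: cvg_id.
have [N hN] := cpt_bnd cS (cont_mnorm hid).
have hin s : s != 0 -> `|s| <= 1 ->
    (SL2 R `&` (fun g => conj_actV g A) @^-1` K) (gs s).
  move=> s0 s1; split; first exact: gs_det.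
  rewrite /= gs_conj // => i x y; apply: normle_SQ => //.
  apply: le_trans (mnorm_entry _ x y) _; apply: le_trans (mnormM3 _ _ _) _.
  rewrite /rho0; apply: ler_wpM2r; first exact: mnorm_ge0.
  apply: ler_wpM2l; first exact: mnorm_ge0.
  apply: le_trans (dgm_conj_norm s0 s1 (hB10 i)) _; exact: le_sum_mnorm.
pose M1 := invmx P *m dgm 1 0 *m P.
pose M2 := invmx P *m dgm 0 1 *m P.
have gs_split s : gs s = s *: M1 + s^-1 *: M2.
  by rewrite /gs dgm_split mulmxDr mulmxDl -!scalemxAr -!scalemxAl.
have M2n0 : M2 != 0.
  apply/eqP => h0.
  have : P *m M2 *m invmx P = dgm 0 1.
    by rewrite /M2 !mulmxA mulmxV // mul1mx mulmxK.
  rewrite h0 mulmx0 mul0mx => /matrixP /(_ 1 1); rewrite !mxE /=.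
  by move/eqP; rewrite eq_sym oner_eq0.
set m1 := mnorm M1; set m2 := mnorm M2.
have m10 : 0 <= m1 by exact: mnorm_ge0.
have m2p : 0 < m2.
  rewrite lt_def mnorm_ge0 andbT; apply: contra M2n0 => /eqP h0.
  apply/eqP/matrixP => i j; rewrite [RHS]mxE; apply/eqP; rewrite -normr_le0 -h0.
  exact: mnorm_entry.
pose c := N%:R + m1 + m2.
have N0 : 0 <= (N%:R : C) := ler0n _ _.
have Nm0 : 0 <= N%:R + m1 := addr_ge0 N0 m10.
have cp : 0 < c.
  apply: (lt_le_trans m2p); rewrite /c lerDr; exact: Nm0.
pose s := m2 / c.
have sp : 0 < s by rewrite divr_gt0.
have s0 : s != 0 by rewrite gt_eqF.
have s1 : `|s| <= 1.
  rewrite (gtr0_norm sp) (ler_pdivrMr _ _ cp) mul1r /c lerDr; exact: Nm0.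
have hS := hin s s0 s1.
have hNs : mnorm (gs s) < N%:R.
  by rewrite -(ger0_norm (mnorm_ge0 (gs s))); exact: hN.
have e : s^-1 *: M2 = gs s - s *: M1 by rewrite gs_split addrAC subrr add0r.
have m2n0 : m2 != 0 := lt0r_neq0 m2p.
have sip : 0 < s^-1 by rewrite invr_gt0.
have hc : mnorm (s^-1 *: M2) = c.
  by rewrite mnormZ (gtr0_norm sip) /s invf_div (divfK m2n0).
have s1' : s <= 1 by rewrite -(gtr0_norm sp).
have : c < N%:R + m1.
  rewrite -hc e; apply: le_lt_trans (mnormB _ _) _.
  rewrite mnormZ (gtr0_norm sp); apply: ltr_leD; first exact: hNs.
  exact: ler_piMl m10 s1'.
rewrite /c => h.
have h2 : N%:R + m1 <= N%:R + m1 + m2 by rewrite lerDl; exact: ltW.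
by have := lt_le_trans h h2; rewrite ltxx.
Qed.

End Stab4.
Lemma stab_CE (R : realType) n (A : Vn R n) : stableV A <-> ~ CE A.
Proof. by split; [exact: stable_notCE | exact: notCE_stable]. Qed.

Unset Implicit Arguments.
Theorem theorem3p3 (R : realType) (n : nat) (A : Vn R n) :
  (0 < n)%N ->
  [/\ (stableV A <->
        exists j k l : 'I_n, stableV (tripleV (A j) (A k) (A l))),
      (stableV A <->
        exists j k l : 'I_n, sigmaV A j k != 0 \/ DeltaV A j k l != 0),
      (stableV A <->
        ~ exists B : {ptws 'I_n -> 'M[R[i]]_2}, similarV A B /\ upper_tri_tupleV B)
    & (stableV A <->
        ~ exists W : 'M[R[i]]_2,
            [/\ (0 < \rank W)%N, (\rank W < 2)%N & forall i, preservesV (A i) W])].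
Proof.
move=> _.
have hS := stab_CE A.
have hiii : ~ CE A <-> exists j k l : 'I_n, sigmaV A j k != 0 \/ DeltaV A j k l != 0.
  split.
    move=> hn; apply: contrapT => hno; apply: hn; apply/inv_CE => j k l.
    split; apply/eqP; apply: contrapT => h; apply: hno; exists j, k, l.
      by left; apply/negP.
    by right; apply/negP.
  move=> [j [k [l h]]] hce; have [h1 h2] := (inv_CE A).1 hce j k l.
  by case: h; rewrite ?h1 ?h2 eqxx.
split.
- rewrite hS; split.
    move=> /hiii [j [k [l h]]]; exists j, k, l; apply/stab_CE => hT.
    have [h1 h2] := (inv_CE _).1 hT 0 1 2.
    by case: h => /eqP; apply; [rewrite -h1 | rewrite -h2].
  move=> [j [k [l hT]]] [u [un hu]]; move/stab_CE: hT; apply.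
  exists u; split => // i; rewrite /tripleV (tnth_nth 0) /=.
  by case: i => [[|[|[|//]]] Hi] /=; apply: hu.
- by rewrite hS.
- rewrite hS; split => h1 h2; apply: h1; [exact/(UT_CE A)|exact/(UT_CE A)].
- rewrite hS; split => h1 h2; apply: h1; [exact/(W_CE A)|exact/(W_CE A)].
Qed.
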